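(* Let $(M^4,\widetilde g)$ be the Walker $4$-manifold of the context, let $f$ be a smooth function on $M^4$ depending only on $(u,v)$, let $Y$ be a smooth vector field with $\operatorname{div}(Y)=0$, and let $X=\nabla f+Y$. If $(M^4,\widetilde g,X,\lambda,\beta_1,\beta_2)$ is a Ricci–Yamabe soliton, then it is steady, i.e. $\lambda=0$.
   Context: $M^4$ is a smooth $4$-manifold with coordinates $(x,y,u,v)$ and metric \[ \widetilde g=\begin{pmatrix}0&0&1&0\\0&0&0&1\\1&0&F&0\\0&1&0&F\end{pmatrix},\qquad F(x,y,u,v)=x\,a(u,v)+y\,b(u,v)+c(u,v), \] with $a,b,c$ smooth real functions of $(u,v)$ only. For $\widetilde g$, $R=0$ and the only nonzero Ricci components are $R_{33}=\tfrac12 b^2-b_v$, $R_{34}=R_{43}=\tfrac12(-ab+a_v+b_u)$, $R_{44}=\tfrac12 a^2-a_u$. $\nabla f$ is the gradient and $\mathcal{L}_X$ the Lie derivative. A Ricci–Yamabe soliton $(M^4,\widetilde g,X,\lambda,\beta_1,\beta_2)$ consists of a smooth vector field $X$ and real constants $\lambda,\beta_1,\beta_2$ with $2\beta_1\mathrm{Ric}+\mathcal{L}_X\widetilde g=(-2\lambda+\beta_2R)\widetilde g$; it is steady if $\lambda=0$. *)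

(* Defs.v *)
From HB Require Import structures.
From mathcomp Require Import all_boot all_order all_algebra.
From mathcomp Require Import all_classical all_reals all_analysis.
Set Implicit Arguments. Unset Strict Implicit. Unset Printing Implicit Defensive.
Import Order.TTheory GRing.Theory Num.Theory.
Import numFieldNormedType.Exports.
Local Open Scope ring_scope.

Section Walker.
Variable R : realType.

Definition pt4 := 'rV[R]_4.
Definition xc (p : pt4) := p 0 0.
Definition yc (p : pt4) := p 0 1.
Definition uc (p : pt4) := p 0 2%:R.
Definition vc (p : pt4) := p 0 3%:R.

Definition ebasis (i : 'I_4) : pt4 := delta_mx 0 i.

Definition pd (i : 'I_4) (f : pt4 -> R) : pt4 -> R :=
  fun p => derive f p (ebasis i).

Definition iterD (s : seq 'I_4) (f : pt4 -> R) : pt4 -> R := foldr pd f s.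

Definition smooth (f : pt4 -> R) : Prop :=
  forall (s : seq 'I_4) (p : pt4), differentiable (iterD s f) p.

(* vector fields are given by their components in the coordinate frame *)
Definition vfield := 'I_4 -> pt4 -> R.

Variables a b c : R -> R -> R.

Definition Fw (p : pt4) : R := xc p * a (uc p) (vc p) + yc p * b (uc p) (vc p) + c (uc p) (vc p).

(* the Walker metric  [[0,0,1,0],[0,0,0,1],[1,0,F,0],[0,1,0,F]] *)
Definition gmat (p : pt4) : 'M[R]_4 :=
  \matrix_(i < 4, j < 4)
    if [|| ((i : nat) == 0%N) && ((j : nat) == 2%N), ((i : nat) == 2%N) && ((j : nat) == 0%N),
           ((i : nat) == 1%N) && ((j : nat) == 3%N) | ((i : nat) == 3%N) && ((j : nat) == 1%N)]
    then 1
    else if ((i : nat) == (j : nat)) && (2 <= (i : nat))%N then Fw p else 0.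

Definition gw (i j : 'I_4) : pt4 -> R := fun p => gmat p i j.
Definition ginv (p : pt4) : 'M[R]_4 := invmx (gmat p).

Definition Gam (k i j : 'I_4) : pt4 -> R := fun p =>
  2^-1 * \sum_(l < 4) ginv p k l * (pd i (gw j l) p + pd j (gw i l) p - pd l (gw i j) p).

Definition Ric (i j : 'I_4) : pt4 -> R := fun p =>
  \sum_(k < 4) (pd k (Gam k i j) p - pd j (Gam k i k) p)
  + \sum_(k < 4) \sum_(l < 4) (Gam k k l p * Gam l i j p - Gam k j l p * Gam l i k p).

Definition scal : pt4 -> R := fun p =>
  \sum_(i < 4) \sum_(j < 4) ginv p i j * Ric i j p.

Definition grad (f : pt4 -> R) : vfield := fun i p =>
  \sum_(j < 4) ginv p i j * pd j f p.

Definition div (Y : vfield) : pt4 -> R := fun p =>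
  \sum_(i < 4) (pd i (Y i) p + \sum_(k < 4) Gam i i k p * Y k p).

Definition lieg (X : vfield) (i j : 'I_4) : pt4 -> R := fun p =>
  \sum_(k < 4) (X k p * pd k (gw i j) p + gw k j p * pd i (X k) p + gw i k p * pd j (X k) p).

Definition ricci_yamabe_soliton (X : vfield) (lambda beta1 beta2 : R) : Prop :=
  forall (i j : 'I_4) (p : pt4),
    2 * beta1 * Ric i j p + lieg X i j p = (- (2 * lambda) + beta2 * scal p) * gw i j p.

End Walker.

(* Main.v *)
Require Import Defs.
From HB Require Import structures.
From mathcomp Require Import all_boot all_order all_algebra.
From mathcomp Require Import all_classical all_reals all_analysis.
Import Order.TTheory GRing.Theory Num.Theory.
Import numFieldNormedType.Exports.
From mathcomp Require Import ring lra.
Local Open Scope ring_scope.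

Local Open Scope classical_set_scope.
Lemma derive_quot (R : realType) (f : pt4 R -> R) p v (k : R) :
  (forall h : R, f (h *: v + p) = f p + h * k) ->
  derive f p v = k /\ derivable f p v.
Proof.
move=> H.
have E : \forall h \near (0:R)^', h^-1 *: ((f \o shift p) (h *: v) - f p) = k.
  near=> h.
  have hn0 : h != 0 by near: h; exact: nbhs_dnbhs_neq.
  by rewrite /= H addrC addKr /GRing.scale /= mulrA mulVf // mul1r.
split; first exact: lim_near_cst.
apply/cvg_ex; exists k; exact: cvg_near_cst.
Unshelve. all: by end_near.
Qed.

Local Close Scope classical_set_scope.
Lemma derive_const0 (R : realType) (f : pt4 R -> R) p v :
  (forall h : R, f (h *: v + p) = f p) -> derive f p v = 0 /\ derivable f p v.
Proof. by move=> H; apply: derive_quot => h; rewrite H mulr0 addr0. Qed.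
Lemma derive_cst0 (R : realType) (f : pt4 R -> R) p v :
  (forall h : R, f (h *: v + p) = f p) -> derive f p v = 0.
Proof. by move=> H; have [] := @derive_const0 _ _ _ _ H. Qed.

Section H.
Context {R : realType}.
Implicit Types (f g : pt4 R -> R) (p v : pt4 R).

Lemma dD f g p v : derivable f p v -> derivable g p v ->
  derive (fun q => f q + g q) p v = derive f p v + derive g p v.
Proof. move=> df dg; exact: (deriveD df dg). Qed.
Lemma dbD f g p v : derivable f p v -> derivable g p v ->
  derivable (fun q => f q + g q) p v.
Proof. move=> df dg; exact: (derivableD df dg). Qed.
Lemma dZ f (k : R) p v : derivable f p v ->
  derive (fun q => k * f q) p v = k * derive f p v.
Proof. move=> df; exact: (deriveZ k df). Qed.
Lemma dbZ f (k : R) p v : derivable f p v -> derivable (fun q => k * f q) p v.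
Proof. by move=> df; have := @derivableZ _ _ _ _ k _ _ df. Qed.
Lemma dM f g p v : derivable f p v -> derivable g p v ->
  derive (fun q => f q * g q) p v = f p * derive g p v + g p * derive f p v.
Proof. move=> df dg; exact: (deriveM df dg). Qed.
Lemma dbM f g p v : derivable f p v -> derivable g p v ->
  derivable (fun q => f q * g q) p v.
Proof. move=> df dg; exact: (derivableM df dg). Qed.
Lemma dS n (h : 'I_n -> pt4 R -> R) p v : (forall m, derivable (h m) p v) ->
  derive (fun q => \sum_(m < n) h m q) p v = \sum_(m < n) derive (h m) p v.
Proof.
move=> dh; rewrite -(derive_sum dh); congr derive.
by apply/funext => q; rewrite fct_sumE.
Qed.
Lemma dbS n (h : 'I_n -> pt4 R -> R) p v : (forall m, derivable (h m) p v) ->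
  derivable (fun q => \sum_(m < n) h m q) p v.
Proof.
move=> dh; have := derivable_sum dh.
by rewrite (_ : (\sum_(m < n) h m) = (fun q => \sum_(m < n) h m q)) //; apply/funext => q; rewrite fct_sumE.
Qed.
End H.

Section HP.
Context {R : realType}.
Implicit Types (f g : pt4 R -> R) (p : pt4 R).
Lemma pdD n f g p : derivable f p (ebasis R n) -> derivable g p (ebasis R n) ->
  pd n (fun q => f q + g q) p = pd n f p + pd n g p.
Proof. exact: dD. Qed.
Lemma pdZ n f (k : R) p : derivable f p (ebasis R n) ->
  pd n (fun q => k * f q) p = k * pd n f p.
Proof. exact: dZ. Qed.
Lemma pdM n f g p : derivable f p (ebasis R n) -> derivable g p (ebasis R n) ->
  pd n (fun q => f q * g q) p = f p * pd n g p + g p * pd n f p.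
Proof. exact: dM. Qed.
Lemma pdS n m (h : 'I_m -> pt4 R -> R) p : (forall i, derivable (h i) p (ebasis R n)) ->
  pd n (fun q => \sum_(i < m) h i q) p = \sum_(i < m) pd n (h i) p.
Proof. exact: dS. Qed.
End HP.


Arguments Fw : simpl never.
Arguments pd : simpl never.
Arguments derive : simpl never.

Definition Gm {R : realType} (F : R) : 'M[R]_4 :=
  \matrix_(i < 4, j < 4)
    if (((i : nat) == 0%N) && ((j : nat) == 0%N)) || (((i : nat) == 1%N) && ((j : nat) == 1%N)) then - F
    else if [|| ((i : nat) == 0%N) && ((j : nat) == 2%N), ((i : nat) == 2%N) && ((j : nat) == 0%N),
           ((i : nat) == 1%N) && ((j : nat) == 3%N) | ((i : nat) == 3%N) && ((j : nat) == 1%N)]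
    then 1 else 0.

Ltac ord4 i := let H := fresh "H" in case: i => [[|[|[|[|?]]]] H] //.

Lemma ginvE (R : realType) (a b c : R -> R -> R) (p : pt4 R) : ginv a b c p = Gm (Fw a b c p).
Proof.
have E : gmat a b c p *m Gm (Fw a b c p) = 1%:M.
  apply/matrixP => i j; rewrite !mxE !big_ord_recl big_ord0 !mxE.
  by ord4 i; ord4 j; rewrite /= ?mxE /=; ring.
have [U _] := mulmx1_unit E.
by rewrite /ginv -[RHS]mul1mx -(mulVmx U) -mulmxA E mulmx1.
Qed.

Definition dd {R : realType} (F : pt4 R -> R) (i j m : 'I_4) (p : pt4 R) : R :=
  if ((i : nat) == j) && (2 <= i)%N then pd m F p else 0.

Lemma gwE (R : realType) (a b c : R -> R -> R) (i j : 'I_4) :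
  gw a b c i j = fun p => if ((i : nat) == j) && (2 <= i)%N then Fw a b c p
     else if [|| ((i : nat) == 0%N) && ((j : nat) == 2%N), ((i : nat) == 2%N) && ((j : nat) == 0%N),
           ((i : nat) == 1%N) && ((j : nat) == 3%N) | ((i : nat) == 3%N) && ((j : nat) == 1%N)]
    then 1 else 0.
Proof.
apply/funext => p; rewrite /gw /gmat mxE.
by ord4 i; ord4 j.
Qed.

Lemma pd_gw (R : realType) (a b c : R -> R -> R) (i j m : 'I_4) p :
  pd m (gw a b c i j) p = dd (Fw a b c) i j m p.
Proof.
rewrite gwE /dd; case: (_ && _).
  reflexivity.
by case: ifP => _; apply: derive_cst0.
Qed.

Definition sig (k : nat) : nat := match k with 0 => 2 | 1 => 3 | 2 => 0 | _ => 1 end%N.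
Definition cf {R : realType} (k i j m : 'I_4) : R :=
  (if ((j : nat) == sig k) && (2 <= j)%N && ((m : nat) == i) then 1 else 0)
  + (if ((i : nat) == sig k) && (2 <= i)%N && ((m : nat) == j) then 1 else 0)
  - (if ((i : nat) == j) && (2 <= i)%N && ((m : nat) == sig k) then 1 else 0).
Definition qf {R : realType} (k i j : 'I_4) : R :=
  if ((i : nat) == j) && (2 <= i)%N && (k < 2)%N then 1 else 0.
Definition GamA {R : realType} (F0 : R) (d : 'I_4 -> R) (k i j : 'I_4) : R :=
  2^-1 * (\sum_(m < 4) cf k i j m * d m + qf k i j * (F0 * d k)).
Definition GamC {R : realType} (F : pt4 R -> R) (k i j : 'I_4) (p : pt4 R) : R :=
  GamA (F p) (fun m => pd m F p) k i j.

Lemma ord4_cases (i : 'I_4) :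
  i = ord0 \/ i = lift ord0 ord0 \/ i = lift ord0 (lift ord0 ord0) \/
  i = lift ord0 (lift ord0 (lift ord0 ord0)).
Proof.
by case: i => [[|[|[|[|?]]]] H]; [left|right;left|right;right;left|right;right;right|];
  rewrite //; apply: val_inj.
Qed.

Ltac o4 i := case: (ord4_cases i) => [->|[->|[->|->]]].



Arguments GRing.add : simpl never.
Arguments GRing.mul : simpl never.
Arguments GRing.opp : simpl never.
Arguments GRing.inv : simpl never.
Arguments GRing.natmul : simpl never.
Arguments GRing.zero : simpl never.
Arguments GRing.one : simpl never.
Lemma GamA_E (R : realType) (F0 : R) (d : 'I_4 -> R) (k i j : 'I_4) :
  2^-1 * (\sum_(l < 4) Gm F0 k l * ((if ((j : nat) == l) && (2 <= j)%N then d i else 0)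
      + (if ((i : nat) == l) && (2 <= i)%N then d j else 0)
      - (if ((i : nat) == j) && (2 <= i)%N then d l else 0))) = GamA F0 d k i j.
Proof.
rewrite /GamA /cf /qf !big_ord_recl !big_ord0 !mxE.
o4 k; o4 i; o4 j; rewrite /=; ring.
Qed.

Lemma GamE (R : realType) (a b c : R -> R -> R) k i j p :
  Gam a b c k i j p = GamC (Fw a b c) k i j p.
Proof.
rewrite /Gam ginvE; under eq_bigr do rewrite !pd_gw.
rewrite /GamC /dd -GamA_E //.
Qed.

Lemma GamF (R : realType) (a b c : R -> R -> R) k i j :
  Gam a b c k i j = GamC (Fw a b c) k i j.
Proof. by apply/funext => p; rewrite GamE. Qed.


Lemma coordS (R : realType) (h : R) (m : 'I_4) (p : pt4 R) (j : 'I_4) :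
  (h *: ebasis R m + p) 0 j = h * (if (m : nat) == j then 1 else 0) + p 0 j.
Proof.
rewrite !mxE /=; congr (_ * _ + _).
by rewrite eq_sym; case: eqP => [->|H]; [rewrite eqxx|case: eqP => // E; case: H; apply: val_inj].
Qed.

Lemma ucS (R : realType) (h : R) (m : 'I_4) (p : pt4 R) :
  uc (h *: ebasis R m + p) = h * (if (m : nat) == 2%N then 1 else 0) + uc p.
Proof. by rewrite /uc coordS. Qed.
Lemma vcS (R : realType) (h : R) (m : 'I_4) (p : pt4 R) :
  vc (h *: ebasis R m + p) = h * (if (m : nat) == 3%N then 1 else 0) + vc p.
Proof. by rewrite /vc coordS. Qed.
Lemma xcS (R : realType) (h : R) (m : 'I_4) (p : pt4 R) :
  xc (h *: ebasis R m + p) = h * (if (m : nat) == 0%N then 1 else 0) + xc p.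
Proof. by rewrite /xc coordS. Qed.
Lemma ycS (R : realType) (h : R) (m : 'I_4) (p : pt4 R) :
  yc (h *: ebasis R m + p) = h * (if (m : nat) == 1%N then 1 else 0) + yc p.
Proof. by rewrite /yc coordS. Qed.

Definition dep_uv {R : realType} (h : pt4 R -> R) :=
  forall p q, uc p = uc q -> vc p = vc q -> h p = h q.

Lemma pd_dep0 (R : realType) (h : pt4 R -> R) (m : 'I_4) p :
  dep_uv h -> (m < 2)%N -> pd m h p = 0 /\ derivable h p (ebasis R m).
Proof.
move=> dh m2; apply: derive_const0 => t; apply: dh.
  by rewrite ucS; case: eqP m2 => [->|_] //; rewrite mulr0 add0r.
by rewrite vcS; case: eqP m2 => [->|_] //; rewrite mulr0 add0r.
Qed.

Lemma dep_pd (R : realType) (h : pt4 R -> R) (m : 'I_4) :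
  dep_uv h -> dep_uv (pd m h).
Proof.
move=> dh p q Hu Hv; rewrite /pd /derive.
have -> : (fun t : R => t^-1 *: ((h \o shift p) (t *: ebasis R m) - h p)) =
          (fun t : R => t^-1 *: ((h \o shift q) (t *: ebasis R m) - h q)).
  apply/funext => t /=; rewrite (dh p q) // (dh (t *: ebasis R m + p) (t *: ebasis R m + q)) //.
    by rewrite !ucS Hu.
  by rewrite !vcS Hv.
by [].
Qed.

Section FLemmas.
Context (R : realType) (a b c : R -> R -> R).
Let A := fun p : pt4 R => a (uc p) (vc p).
Let B := fun p : pt4 R => b (uc p) (vc p).
Let C := fun p : pt4 R => c (uc p) (vc p).
Hypothesis sA : smooth A.
Hypothesis sB : smooth B.
Hypothesis sC : smooth C.

Let dr (h : pt4 R -> R) (s : seq (ordinal 4)) (q v : pt4 R) : smooth h -> derivable (Defs.iterD s h) q v.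
Proof. by move=> sh; apply: diff_derivable; apply: sh. Qed.

Lemma xc_der (n : 'I_4) q : pd n (@xc R) q = (if (n : nat) == 0%N then 1 else 0) /\ derivable (@xc R) q (ebasis R n).
Proof. by apply: derive_quot => h; rewrite xcS addrC mulrC. Qed.
Lemma yc_der (n : 'I_4) q : pd n (@yc R) q = (if (n : nat) == 1%N then 1 else 0) /\ derivable (@yc R) q (ebasis R n).
Proof. by apply: derive_quot => h; rewrite ycS addrC mulrC. Qed.

Lemma pdF (m : 'I_4) :
  pd m (Fw a b c) = fun q => xc q * pd m A q + (if (m : nat) == 0%N then 1 else 0) * A q
     + (yc q * pd m B q + (if (m : nat) == 1%N then 1 else 0) * B q) + pd m C q.
Proof.
apply/funext => q.
have [x1 x2] := xc_der m q; have [y1 y2] := yc_der m q.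
have dA := dr A [::] q (ebasis R m) sA; have dB := dr B [::] q (ebasis R m) sB.
have dC := dr C [::] q (ebasis R m) sC.
have -> : Fw a b c = fun q => (xc q * A q + yc q * B q) + C q by [].
rewrite /pd dD; last by []; last by apply: dbD; apply: dbM.
rewrite dD; [|by apply: dbM|by apply: dbM].
rewrite !dM //.
rewrite /pd in x1 y1; rewrite x1 y1; ring.
Qed.

Lemma difD (f g : pt4 R -> R) q : differentiable f q -> differentiable g q ->
  differentiable (fun x => f x + g x) q.
Proof. by move=> df dg; have := differentiableD df dg. Qed.
Lemma difM (f g : pt4 R -> R) q : differentiable f q -> differentiable g q ->
  differentiable (fun x => f x * g x) q.
Proof. by move=> df dg; have := differentiableM df dg. Qed.
Lemma difc (k : R) q : differentiable (fun _ : pt4 R => k) q.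
Proof. exact: differentiable_cst. Qed.
Lemma difx q : differentiable (@xc R) q.
Proof. exact: differentiable_coord. Qed.
Lemma dify q : differentiable (@yc R) q.
Proof. exact: differentiable_coord. Qed.

Lemma F_diff q : differentiable (Fw a b c) q.
Proof.
have -> : Fw a b c = fun q => (xc q * A q + yc q * B q) + C q by [].
apply: difD; [apply: difD; apply: difM|].
all: first [exact: difx | exact: dify | exact: (sA [::] q) | exact: (sB [::] q) | exact: (sC [::] q)].
Qed.

Lemma F1_diff m q : differentiable (pd m (Fw a b c)) q.
Proof.
rewrite pdF.
apply: difD; [apply: difD; apply: difD|]; try apply: difM.
all: first [exact: difx | exact: dify | exact: difc | exact: (sA [:: m] q) | exact: (sB [:: m] q) |
  exact: (sC [:: m] q) | exact: (sA [::] q) | exact: (sB [::] q)].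
Qed.

Lemma depA : dep_uv A. Proof. by move=> p q Hu Hv; rewrite /A Hu Hv. Qed.
Lemma depB : dep_uv B. Proof. by move=> p q Hu Hv; rewrite /B Hu Hv. Qed.
Lemma depC : dep_uv C. Proof. by move=> p q Hu Hv; rewrite /C Hu Hv. Qed.

Lemma pdF0 : pd ord0 (Fw a b c) = A.
Proof.
rewrite pdF; apply/funext => q /=.
have [-> _] := @pd_dep0 _ A ord0 q depA isT.
have [-> _] := @pd_dep0 _ B ord0 q depB isT.
have [-> _] := @pd_dep0 _ C ord0 q depC isT.
ring.
Qed.
Lemma pdF1 : pd (lift ord0 ord0) (Fw a b c) = B.
Proof.
rewrite pdF; apply/funext => q /=.
have [-> _] := @pd_dep0 _ A (lift ord0 ord0) q depA isT.
have [-> _] := @pd_dep0 _ B (lift ord0 ord0) q depB isT.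
have [-> _] := @pd_dep0 _ C (lift ord0 ord0) q depC isT.
ring.
Qed.
Lemma F00 q : pd ord0 (pd ord0 (Fw a b c)) q = 0.
Proof. by rewrite pdF0; have [-> _] := @pd_dep0 _ A ord0 q depA isT. Qed.
Lemma F11 q : pd (lift ord0 ord0) (pd (lift ord0 ord0) (Fw a b c)) q = 0.
Proof. by rewrite pdF1; have [-> _] := @pd_dep0 _ B (lift ord0 ord0) q depB isT. Qed.
End FLemmas.


Definition GamDA {R : realType} (F0 : R) (d : 'I_4 -> R) (e : 'I_4 -> R) (k i j n : 'I_4) : R :=
  2^-1 * (\sum_(m < 4) cf k i j m * e m + qf k i j * (F0 * e k + d k * d n)).

Lemma pdGamC (R : realType) (F : pt4 R -> R) (n k i j : 'I_4) (p : pt4 R) :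
  (forall v, derivable F p v) -> (forall m v, derivable (pd m F) p v) ->
  pd n (GamC F k i j) p = GamDA (F p) (fun m => pd m F p) (fun m => pd n (pd m F) p) k i j n.
Proof.
move=> dF dF1.
have dS1 : forall m, derivable (fun q => cf k i j m * pd m F q) p (ebasis R n).
  by move=> m; apply: dbZ.
have dS2 : derivable (fun q => \sum_(m < 4) cf k i j m * pd m F q) p (ebasis R n).
  by apply: (@dbS _ 4 (fun m q => cf k i j m * pd m F q)).
have dP : derivable (fun q => qf k i j * (F q * pd k F q)) p (ebasis R n).
  by apply: dbZ; apply: dbM.
rewrite /GamC /GamA /GamDA.
rewrite (pdZ _ _ _ _ (dbD _ _ _ _ dS2 dP)).
rewrite (pdD _ _ _ _ dS2 dP).
rewrite (@pdS _ n 4 (fun m q => cf k i j m * pd m F q)) //.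
rewrite (pdZ n (fun q => F q * pd k F q) (qf k i j) p (dbM _ _ _ _ (dF _) (dF1 _ _))).
rewrite (pdM n F (pd k F) p (dF _) (dF1 _ _)).
congr (_ * (_ + _ * _)).
  by apply: eq_bigr => m _; rewrite (pdZ _ _ _ _ (dF1 _ _)).
Qed.


Definition RicA {R : realType} (F0 : R) (d : 'I_4 -> R) (e : 'I_4 -> 'I_4 -> R) (i j : 'I_4) : R :=
  \sum_(k < 4) (GamDA F0 d (e k) k i j k - GamDA F0 d (e j) k i k j)
  + \sum_(k < 4) \sum_(l < 4) (GamA F0 d k k l * GamA F0 d l i j - GamA F0 d k j l * GamA F0 d l i k).

Definition ricok (i j : 'I_4) : bool :=
  [|| ((i : nat) == 0%N) && ((j : nat) == 0%N), ((i : nat) == 1%N) && ((j : nat) == 1%N),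
      ((i : nat) == 0%N) && ((j : nat) == 2%N), ((i : nat) == 2%N) && ((j : nat) == 0%N),
      ((i : nat) == 1%N) && ((j : nat) == 3%N) | ((i : nat) == 3%N) && ((j : nat) == 1%N)].

Lemma sum4 (R : realType) (f : 'I_4 -> R) :
  \sum_(i < 4) f i = f ord0 + f (lift ord0 ord0) + f (lift ord0 (lift ord0 ord0))
    + f (lift ord0 (lift ord0 (lift ord0 ord0))).
Proof. by rewrite !big_ord_recl big_ord0 addr0 !addrA. Qed.

Lemma RicA0 (R : realType) (F0 : R) (d : 'I_4 -> R) (e : 'I_4 -> 'I_4 -> R) (i j : 'I_4) :
  e ord0 ord0 = 0 -> e (lift ord0 ord0) (lift ord0 ord0) = 0 ->
  ricok i j -> RicA F0 d e i j = 0.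
Proof.
move=> e00 e11.
rewrite /RicA /GamDA /GamA.
rewrite !sum4.
o4 i; o4 j; rewrite /ricok /cf /qf /= // => _.
all: rewrite ?e00 ?e11.
all: ring.
Qed.


Lemma RicE (R : realType) (a b c : R -> R -> R) (i j : 'I_4) (p : pt4 R) :
  (forall q v, derivable (Fw a b c) q v) -> (forall m q v, derivable (pd m (Fw a b c)) q v) ->
  Ric a b c i j p = RicA (Fw a b c p) (fun m => pd m (Fw a b c) p)
     (fun n m => pd n (pd m (Fw a b c)) p) i j.
Proof.
move=> dF dF1.
rewrite /Ric /RicA; congr (_ + _).
  apply: eq_bigr => k _; rewrite !GamF.
  by rewrite !pdGamC.
apply: eq_bigr => k _; apply: eq_bigr => l _.
by rewrite !GamE.
Qed.


Lemma Gm0 (R : realType) (F0 : R) (i j : 'I_4) : ricok i j = false -> Gm F0 i j = 0.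
Proof. rewrite mxE; o4 i; o4 j; rewrite /ricok //=. Qed.

Lemma GamTr (R : realType) (F0 : R) (d : 'I_4 -> R) (k : 'I_4) :
  \sum_(i < 4) GamA F0 d i i k = 0.
Proof. rewrite sum4 /GamA !sum4 /cf /qf; o4 k; rewrite /=; ring. Qed.

Lemma liegE (R : realType) (a b c : R -> R -> R) X (i j : 'I_4) p :
  lieg a b c X i j p = \sum_(k < 4) (X k p * dd (Fw a b c) i j k p
     + gw a b c k j p * pd i (X k) p + gw a b c i k p * pd j (X k) p).
Proof. by apply: eq_bigr => k _; rewrite pd_gw. Qed.

Theorem mainTheorem6 (R : realType) (a b c : R -> R -> R)
  (f : pt4 R -> R) (Y : vfield R) (lambda beta1 beta2 : R) :
  smooth (fun p : pt4 R => a (uc p) (vc p)) ->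
  smooth (fun p : pt4 R => b (uc p) (vc p)) ->
  smooth (fun p : pt4 R => c (uc p) (vc p)) ->
  smooth f ->
  (forall p q : pt4 R, uc p = uc q -> vc p = vc q -> f p = f q) ->
  (forall i : 'I_4, smooth (Y i)) ->
  (forall p : pt4 R, div a b c Y p = 0) ->
  ricci_yamabe_soliton a b c (fun i p => grad a b c f i p + Y i p) lambda beta1 beta2 ->
  lambda = 0.
Proof.
move=> sA sB sC sf hf sY divY sol.
have dF : forall q v, derivable (Fw a b c) q v.
  by move=> q v; apply: diff_derivable; apply: (@F_diff _ _ _ _ sA sB sC).
have dF1 : forall m q v, derivable (pd m (Fw a b c)) q v.
  by move=> m q v; apply: diff_derivable; apply: (@F1_diff _ _ _ _ sA sB sC).
have RicZ : forall i j q, ricok i j -> Ric a b c i j q = 0.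
  move=> i j q ok; rewrite RicE //; apply: RicA0 => //.
    exact: (@F00 _ _ _ _ sA sB sC).
  exact: (@F11 _ _ _ _ sA sB sC).
have scal0 : forall q, scal a b c q = 0.
  move=> q; rewrite /scal; apply: big1 => i _; apply: big1 => j _; rewrite ginvE.
  case ok: (ricok i j); first by rewrite RicZ ?ok // mulr0.
  by rewrite Gm0 ?ok // mul0r.
have f0 : forall q, pd ord0 f q = 0 by move=> q; have [] := @pd_dep0 _ f ord0 q hf isT.
have f1 : forall q, pd (lift ord0 ord0) f q = 0 by move=> q; have [] := @pd_dep0 _ f (lift ord0 ord0) q hf isT.
have gradE : grad a b c f = fun i q => if (i : nat) == 0%N then pd (lift ord0 (lift ord0 ord0)) f q
   else if (i : nat) == 1%N then pd (lift ord0 (lift ord0 (lift ord0 ord0))) f q else 0.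
  apply/funext => i; apply/funext => q.
  rewrite /grad ginvE sum4 !mxE f0 f1; o4 i; rewrite /=; ring.
set p : pt4 R := 0.
have e00 := sol ord0 ord0 p.
have e11 := sol (lift ord0 ord0) (lift ord0 ord0) p.
have e02 := sol ord0 (lift ord0 (lift ord0 ord0)) p.
have e13 := sol (lift ord0 ord0) (lift ord0 (lift ord0 (lift ord0 ord0))) p.
rewrite RicZ // scal0 liegE sum4 /dd /gw /gmat !mxE /= in e00.
rewrite RicZ // scal0 liegE sum4 /dd /gw /gmat !mxE /= in e11.
rewrite RicZ // scal0 liegE sum4 /dd /gw /gmat !mxE /= in e02.
rewrite RicZ // scal0 liegE sum4 /dd /gw /gmat !mxE /= in e13.
have dG : forall i q v, derivable (grad a b c f i) q v.
  move=> i q v; rewrite gradE; o4 i; rewrite /=.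
  - by apply: diff_derivable; apply: (sf [:: lift ord0 (lift ord0 ord0)]).
  - by apply: diff_derivable; apply: (sf [:: lift ord0 (lift ord0 (lift ord0 ord0))]).
  - by have [] := @derive_const0 _ (fun _ : pt4 R => (0:R)) q v (fun h => erefl).
  - by have [] := @derive_const0 _ (fun _ : pt4 R => (0:R)) q v (fun h => erefl).
have dY : forall i q v, derivable (Y i) q v.
  by move=> i q v; apply: diff_derivable; apply: (sY i [::]).
have PX : forall i, pd i (fun q => grad a b c f i q + Y i q) p = pd i (grad a b c f i) p + pd i (Y i) p.
  by move=> i; rewrite pdD.
have sumG : \sum_(i < 4) pd i (grad a b c f i) p = 0.
  rewrite gradE sum4 /=.
  have [-> _] := @pd_dep0 _ _ ord0 p (@dep_pd _ _ (lift ord0 (lift ord0 ord0)) hf) isT.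
  have [-> _] := @pd_dep0 _ _ (lift ord0 ord0) p (@dep_pd _ _ (lift ord0 (lift ord0 (lift ord0 ord0))) hf) isT.
  have pz : forall n q, pd n (fun _ : pt4 R => (0:R)) q = 0 by move=> n q; apply: derive_cst0.
  rewrite !pz.
  by rewrite !addr0.
have sumY : \sum_(i < 4) pd i (Y i) p = 0.
  have := divY p; rewrite /div big_split /=.
  have -> : \sum_(i < 4) \sum_(k < 4) Gam a b c i i k p * Y k p = 0.
    rewrite exchange_big; apply: big1 => k _ /=; rewrite -mulr_suml.
    under eq_bigr do rewrite GamE.
    by rewrite /GamC GamTr mul0r.
  by rewrite addr0.
have hsum : \sum_(i < 4) pd i (fun q => grad a b c f i q + Y i q) p = 0.
  by under eq_bigr do rewrite PX; rewrite big_split /= sumG sumY addr0.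
rewrite sum4 in hsum.
set P02 := pd ord0 (fun q => grad a b c f (lift ord0 (lift ord0 ord0)) q + Y (lift ord0 (lift ord0 ord0)) q) p in e00 e02.
set P13 := pd (lift ord0 ord0) (fun q => grad a b c f (lift ord0 (lift ord0 (lift ord0 ord0))) q + Y (lift ord0 (lift ord0 (lift ord0 ord0))) q) p in e11 e13.
clearbody P02 P13.
have h02 : P02 = 0 by lra.
have h13 : P13 = 0 by lra.
rewrite h02 in e02; rewrite h13 in e13.
lra.
Qed.
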